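(* Let $B>0$ and $d\ge1$. The compressor $\mathcal{M}_{B,0}$ is not differentially private, i.e., there is no finite $\epsilon>0$ for which $\mathcal{M}_{B,0}$ is $\epsilon$-differentially private. When $\beta>0$, the compressor $\mathcal{M}_{B,\beta}$ is $d\cdot\log\left(\frac{2B+\beta}{\beta}\right)$-differentially private (for all gradient inputs in $\mathbb{R}^d$).
   Context: For $B>0$, the clipping function is $\mathrm{clip}\{g,B\}=\max\{-B,\min\{B,g\}\}$ for $g\in\mathbb{R}$. For $\beta\ge0$ and $B>0$, the randomized compressor $\mathcal{M}_{B,\beta}:\mathbb{R}^d\to\{-1,1\}^d$ acts independently on each coordinate: for $\boldsymbol g\in\mathbb{R}^d$ with coordinates $g_i$, $[\mathcal{M}_{B,\beta}]_i(\boldsymbol g)=1$ with probability $\frac{B+\beta+\mathrm{clip}\{g_i,B\}}{2B+2\beta}$ and $=-1$ otherwise. A randomized algorithm $\mathcal{M}$ with domain $\mathbb{R}^d$ is $\epsilon$-differentially private if $\Pr[\mathcal{M}(x)\in\mathcal{S}]\le e^{\epsilon}\Pr[\mathcal{M}(y)\in\mathcal{S}]$ for all subsets $\mathcal{S}$ of the range of $\mathcal{M}$ and all $x,y\in\mathbb{R}^d$ with $\|x-y\|_1\le1$. *)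

(* Defs.v *)
From HB Require Import structures.
From mathcomp Require Import all_boot all_order all_algebra.
From mathcomp Require Import reals.
From mathcomp Require Import sequences exp.
Set Implicit Arguments.
Unset Strict Implicit.
Unset Printing Implicit Defensive.
Import Order.TTheory GRing.Theory Num.Theory.
Local Open Scope ring_scope.

Definition clip (R : realType) (B g : R) : R := Num.max (- B) (Num.min B g).

(* Output space {-1,1}^d encoded as {ffun 'I_d -> bool}: true = +1, false = -1. *)
Definition out_space (d : nat) := {ffun 'I_d -> bool}.

Definition coord_prob (R : realType) (B beta g : R) (b : bool) : R :=
  let p := (B + beta + clip B g) / (2 * B + 2 * beta) in
  if b then p else 1 - p.

Definition compressor (R : realType) (d : nat) (B beta : R)
    (g : 'rV[R]_d) (s : out_space d) : R :=
  \prod_(i < d) coord_prob B beta (g 0 i) (s i).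

Definition eps_DP (R : realType) (d : nat)
    (M : 'rV[R]_d -> out_space d -> R) (eps : R) : Prop :=
  forall (S : {set out_space d}) (x y : 'rV[R]_d),
    \sum_(i < d) `|x 0 i - y 0 i| <= 1 ->
    \sum_(s in S) M x s <= expR eps * \sum_(s in S) M y s.

(* Main.v *)
Require Import Defs.
From HB Require Import structures.
From mathcomp Require Import all_boot all_order all_algebra.
From mathcomp Require Import reals.
From mathcomp Require Import sequences exp.
From mathcomp Require Import ring lra.
Import Order.TTheory GRing.Theory Num.Theory.
Local Open Scope ring_scope.

Lemma clip_bounds (R : realType) (B g : R) : 0 < B -> -B <= clip B g <= B.
Proof.
move=> hB; rewrite /clip; apply/andP; split.
  by rewrite le_max lexx.
rewrite ge_max ge_min lexx /= andbT; lra.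
Qed.

Arguments clip_bounds {R}.

Lemma coord_bounds (R : realType) (B beta g : R) (b : bool) :
  0 < B -> 0 < beta ->
  beta / (2 * B + 2 * beta) <= coord_prob B beta g b <= (2 * B + beta) / (2 * B + 2 * beta).
Proof.
move=> hB hb; have /andP[c1 c2] := clip_bounds B g hB.
have hD : 0 < 2 * B + 2 * beta by lra.
have hDi : 0 < (2 * B + 2 * beta)^-1 by rewrite invr_gt0.
rewrite /coord_prob; set c := clip B g in c1 c2 *.
case: b.
  by rewrite !ler_pM2r //; apply/andP; split; lra.
have -> : 1 - (B + beta + c) / (2 * B + 2 * beta) = (B + beta - c) / (2 * B + 2 * beta).
  by field; rewrite gt_eqF.
by rewrite !ler_pM2r //; apply/andP; split; lra.
Qed.

Arguments coord_bounds {R}.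

Lemma coord_ratio (R : realType) (B beta g h : R) (b : bool) :
  0 < B -> 0 < beta ->
  coord_prob B beta g b <= (2 * B + beta) / beta * coord_prob B beta h b.
Proof.
move=> hB hb; have /andP[_ a2] := coord_bounds B beta g b hB hb.
have /andP[b1 _] := coord_bounds B beta h b hB hb.
apply: (le_trans a2).
have -> : (2 * B + beta) / (2 * B + 2 * beta) = (2 * B + beta) / beta * (beta / (2 * B + 2 * beta)).
  by field; apply/andP; split; rewrite gt_eqF //; lra.
by rewrite ler_wpM2l // divr_ge0 //; lra.
Qed.

Theorem theorem2 (R : realType) (B : R) (d : nat) :
  0 < B -> (0 < d)%N ->
  (~ exists eps : R, 0 < eps /\ eps_DP (@compressor R d B 0) eps) /\
  (forall beta : R, 0 < beta ->
     eps_DP (@compressor R d B beta) (d%:R * ln ((2 * B + beta) / beta))).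
Proof.
move=> hB hd; split.
  case=> eps [he hdp].
  case: d hd hdp => [//|d] _ hdp.
  pose del := Num.min 1 B.
  have hdel0 : 0 < del by rewrite lt_min ltr01 hB.
  have hdel1 : del <= 1 by rewrite ge_min lexx.
  have hdelB : del <= B by rewrite ge_min lexx orbT.
  pose x : 'rV[R]_d.+1 := \row_i (if i == ord0 then - B + del else - B).
  pose y : 'rV[R]_d.+1 := \row_i (- B).
  pose s0 : out_space d.+1 := [ffun i => i == ord0].
  have := hdp [set s0] x y.
  rewrite !big_set1.
  have -> : \sum_(i < d.+1) `|x 0 i - y 0 i| = del.
    rewrite (bigD1 ord0) //= big1 => [|i hi].
      rewrite !mxE eqxx (_ : - B + del - - B = del); last by ring.
      by rewrite addr0 gtr0_norm.
    by rewrite !mxE (negbTE hi) subrr normr0.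
  move=> /(_ hdel1).
  have -> : compressor B 0 y s0 = 0.
    rewrite /compressor (bigD1 ord0) //= /coord_prob !mxE ffunE eqxx /=.
    have -> : clip B (-B) = - B.
      by rewrite /clip; apply/eqP; rewrite eq_le le_max lexx /= ge_max lexx /= ge_min lexx orbT.
    by rewrite addr0 subrr mul0r mul0r.
  rewrite mulr0 leNgt => /negP; apply.
  rewrite /compressor (bigD1 ord0) //= mulr_gt0 //.
    rewrite /coord_prob !mxE ffunE eqxx /=.
    have -> : clip B (- B + del) = - B + del.
      rewrite /clip; apply/eqP; rewrite eq_le le_max ge_max ge_min le_min.
      rewrite !lexx /= orbT andbT; apply/andP; split; first lra.
      by apply/orP; right; lra.
    rewrite addr0 mulr0 addr0 (_ : B + (- B + del) = del); last by ring.
    by rewrite divr_gt0 //; lra.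
  apply: prodr_gt0 => i hi; rewrite /coord_prob !mxE ffunE (negbTE hi) /=.
  have -> : clip B (- B) = - B.
    by rewrite /clip; apply/eqP; rewrite eq_le le_max lexx /= ge_max lexx /= ge_min lexx orbT.
  by rewrite addr0 mulr0 addr0 subrr mul0r subr0 ltr01.
move=> beta hb S x y _.
have hr : 0 < (2 * B + beta) / beta by rewrite divr_gt0 //; lra.
have -> : expR (d%:R * ln ((2 * B + beta) / beta)) = ((2 * B + beta) / beta) ^+ d.
  by rewrite mulr_natl -lnXn // lnK // posrE exprn_gt0.
rewrite mulr_sumr; apply: ler_sum => s _.
rewrite /compressor.
have -> : ((2 * B + beta) / beta) ^+ d = \prod_(i < d) ((2 * B + beta) / beta).
  by rewrite prodr_const card_ord.
rewrite -big_split /=; apply: ler_prod => i _; apply/andP; split.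
  by have /andP[+ _] := coord_bounds B beta (x 0 i) (s i) hB hb; apply: le_trans; rewrite divr_ge0 //; lra.
exact: coord_ratio.
Qed.
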